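(* Let $X\subset\mathbb{R}^n$ be a closed unbounded subset which is Lipschitz regular at infinity. Then there exists a compact set $K\subset\mathbb{R}^n$ such that each connected component of $X\setminus K$ is Lipschitz normally embedded.
   Context: All subsets carry the Euclidean induced metric. A map is bi-Lipschitz if it is Lipschitz (i.e. $\|f(x_1)-f(x_2)\|\le\lambda\|x_1-x_2\|$ for some $\lambda>0$) with Lipschitz inverse. $X\subset\mathbb{R}^n$ is Lipschitz regular at infinity if there exist compact sets $K_1\subset\mathbb{R}^k$, $K_2\subset\mathbb{R}^n$ (some $k\in\mathbb{N}$) and a bi-Lipschitz homeomorphism $\mathbb{R}^k\setminus K_1\to X\setminus K_2$. For a path connected $Z\subset\mathbb{R}^n$, the inner distance $d_Z(x_1,x_2)$ is the infimum of the lengths of paths in $Z$ joining $x_1$ to $x_2$. A set $Z\subset\mathbb{R}^n$ is Lipschitz normally embedded if there is $\lambda>0$ with $d_Z(x_1,x_2)\le\lambda\|x_1-x_2\|$ for all $x_1,x_2\in Z$. *)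

(* Defs.v *)
From Stdlib Require Vectors.Fin.
From Stdlib Require Import Reals Lra.
Open Scope R_scope.

Definition point (n : nat) : Type := Fin.t n -> R.

Fixpoint sumFin (n : nat) : (Fin.t n -> R) -> R :=
  match n return (Fin.t n -> R) -> R with
  | O => fun _ => 0
  | S m => fun f => f Fin.F1 + sumFin m (fun i => f (Fin.FS i))
  end.

Definition dist {n : nat} (x y : point n) : R :=
  sqrt (sumFin n (fun i => (x i - y i) ^ 2)).

Definition RnSet (n : nat) := point n -> Prop.

Definition is_open {n : nat} (U : RnSet n) : Prop :=
  forall x, U x -> exists eps, 0 < eps /\ forall y, dist x y < eps -> U y.

Definition is_closed {n : nat} (F : RnSet n) : Prop :=
  is_open (fun x => ~ F x).

Definition is_bounded {n : nat} (A : RnSet n) : Prop :=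
  exists M, forall x y, A x -> A y -> dist x y <= M.

(* Compact subsets of R^n (Heine-Borel): closed and bounded. *)
Definition is_compact {n : nat} (K : RnSet n) : Prop :=
  is_closed K /\ is_bounded K.

Definition setminus {n : nat} (A B : RnSet n) : RnSet n := fun x => A x /\ ~ B x.

Definition lipschitz_on {k n : nat} (lam : R) (A : RnSet k) (f : point k -> point n) : Prop :=
  forall x1 x2, A x1 -> A x2 -> dist (f x1) (f x2) <= lam * dist x1 x2.

Definition bilipschitz_homeo {k n : nat} (A : RnSet k) (B : RnSet n)
    (f : point k -> point n) : Prop :=
  exists (g : point n -> point k) (lam : R), 0 < lam /\
    (forall x, A x -> B (f x)) /\ (forall y, B y -> A (g y)) /\
    (forall x, A x -> g (f x) = x) /\ (forall y, B y -> f (g y) = y) /\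
    lipschitz_on lam A f /\ lipschitz_on lam B g.

Definition lipschitz_regular_at_infinity {n : nat} (X : RnSet n) : Prop :=
  exists (k : nat) (K1 : RnSet k) (K2 : RnSet n) (f : point k -> point n),
    is_compact K1 /\ is_compact K2 /\
    bilipschitz_homeo (fun x => ~ K1 x) (setminus X K2) f.

Definition is_connected {n : nat} (S : RnSet n) : Prop :=
  ~ exists U V : RnSet n, is_open U /\ is_open V /\
      (forall x, S x -> U x \/ V x) /\
      (exists x, S x /\ U x) /\ (exists x, S x /\ V x) /\
      (forall x, S x -> U x -> V x -> False).

Definition connected_component {n : nat} (S C : RnSet n) : Prop :=
  (exists x, C x) /\ (forall x, C x -> S x) /\ is_connected C /\
  (forall D : RnSet n, is_connected D -> (forall x, C x -> D x) ->
     (forall x, D x -> S x) -> forall x, D x -> C x).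

Fixpoint poly_sum (m : nat) (f : nat -> R) : R :=
  match m with O => 0 | S m' => poly_sum m' f + f m' end.

Definition path_in {n : nat} (Z : RnSet n) (x1 x2 : point n) (g : R -> point n) : Prop :=
  g 0 = x1 /\ g 1 = x2 /\
  (forall t, 0 <= t <= 1 -> Z (g t)) /\
  (forall t, 0 <= t <= 1 -> forall eps, 0 < eps -> exists delta, 0 < delta /\
     forall s, 0 <= s <= 1 -> Rabs (s - t) < delta -> dist (g s) (g t) < eps).

Definition length_le {n : nat} (g : R -> point n) (L : R) : Prop :=
  forall (m : nat) (t : nat -> R),
    (forall i, (i <= m)%nat -> 0 <= t i <= 1) ->
    (forall i, (i < m)%nat -> t i <= t (S i)) ->
    poly_sum m (fun i => dist (g (t i)) (g (t (S i)))) <= L.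

(* Lipschitz normally embedded: d_Z(x1,x2) <= lam * |x1 - x2|, with the
   infimum defining the inner distance d_Z unfolded. *)
Definition LNE {n : nat} (Z : RnSet n) : Prop :=
  exists lam, 0 < lam /\
    forall x1 x2, Z x1 -> Z x2 -> forall eps, 0 < eps ->
      exists g, path_in Z x1 x2 g /\ length_le g (lam * dist x1 x2 + eps).

(* Main.v *)
Require Import Defs.
From Stdlib Require Import Reals.
Open Scope R_scope.
From Stdlib Require Import Lra Psatz Classical FunctionalExtensionality.
Require Import Defs.

Section Vec.
Context {n : nat}.

Definition vadd (x y : point n) : point n := fun i => x i + y i.
Definition vsub (x y : point n) : point n := fun i => x i - y i.
Definition vscal (c : R) (x : point n) : point n := fun i => c * x i.
Definition vzero : point n := fun _ => 0.
Definition dot (x y : point n) : R := sumFin n (fun i => x i * y i).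
Definition norm (x : point n) : R := dist x vzero.

End Vec.

Lemma sumFin_ext : forall m (f g : Fin.t m -> R), (forall i, f i = g i) -> sumFin m f = sumFin m g.
Proof. induction m; intros f g H; simpl; auto. rewrite H, (IHm (fun i => f (Fin.FS i)) (fun i => g (Fin.FS i))); auto. Qed.

Lemma sumFin_add : forall m (f g : Fin.t m -> R), sumFin m (fun i => f i + g i) = sumFin m f + sumFin m g.
Proof. induction m; intros f g; simpl. lra. rewrite (IHm (fun i => f (Fin.FS i)) (fun i => g (Fin.FS i))); lra. Qed.

Lemma sumFin_scal : forall m c (f : Fin.t m -> R), sumFin m (fun i => c * f i) = c * sumFin m f.
Proof. induction m; intros c f; simpl. lra. rewrite (IHm c (fun i => f (Fin.FS i))); lra. Qed.

Lemma sumFin_nonneg : forall m (f : Fin.t m -> R), (forall i, 0 <= f i) -> 0 <= sumFin m f.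
Proof. induction m; intros f H; simpl. lra. pose proof (H Fin.F1). pose proof (IHm (fun i => f (Fin.FS i)) (fun i => H _)). lra. Qed.

Section VecL.
Context {n : nat}.
Implicit Types x y z : point n.

Lemma dot_add_l x y z : dot (vadd x y) z = dot x z + dot y z.
Proof. unfold dot, vadd. rewrite <- sumFin_add. apply sumFin_ext; intros; ring. Qed.
Lemma dot_sub_l x y z : dot (vsub x y) z = dot x z - dot y z.
Proof. unfold dot, vsub. transitivity (sumFin n (fun i => x i * z i + (-1) * (y i * z i))).
 apply sumFin_ext; intros; ring. rewrite sumFin_add, sumFin_scal; ring. Qed.
Lemma dot_scal_l c x z : dot (vscal c x) z = c * dot x z.
Proof. unfold dot, vscal. rewrite <- sumFin_scal. apply sumFin_ext; intros; ring. Qed.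
Lemma dot_sym x y : dot x y = dot y x.
Proof. unfold dot. apply sumFin_ext; intros; ring. Qed.
Lemma dot_add_r x y z : dot z (vadd x y) = dot z x + dot z y.
Proof. rewrite !(dot_sym z). apply dot_add_l. Qed.
Lemma dot_sub_r x y z : dot z (vsub x y) = dot z x - dot z y.
Proof. rewrite !(dot_sym z). apply dot_sub_l. Qed.
Lemma dot_scal_r c x z : dot z (vscal c x) = c * dot z x.
Proof. rewrite !(dot_sym z). apply dot_scal_l. Qed.
Lemma dot_zero_l z : dot vzero z = 0.
Proof. unfold dot, vzero. transitivity (sumFin n (fun i => 0 * z i)). apply sumFin_ext; intros; ring. rewrite sumFin_scal; ring. Qed.
Lemma dot_pos x : 0 <= dot x x.
Proof. apply sumFin_nonneg; intros; nra. Qed.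

Lemma dist_dot x y : dist x y = sqrt (dot (vsub x y) (vsub x y)).
Proof. unfold dist, dot, vsub. f_equal. apply sumFin_ext; intros; ring. Qed.

Lemma dist_sq x y : dist x y ^ 2 = dot (vsub x y) (vsub x y).
Proof. rewrite dist_dot. rewrite pow2_sqrt; auto using dot_pos. Qed.

Lemma dist_nonneg x y : 0 <= dist x y.
Proof. apply sqrt_pos. Qed.

Lemma CS x y : dot x y ^ 2 <= dot x x * dot y y.
Proof.
  assert (Hq : forall t, 0 <= dot x x + 2 * t * dot x y + t^2 * dot y y).
  { intro t. pose proof (dot_pos (vadd x (vscal t y))).
    rewrite dot_add_l, !dot_add_r, !dot_scal_l, !dot_scal_r, (dot_sym y x) in H. nra. }
  destruct (Req_dec (dot y y) 0) as [E|E].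
  - destruct (Req_dec (dot x y) 0) as [E2|E2]. rewrite E2, E; nra.
    exfalso. pose proof (Hq (-(dot x x + 1)/(2 * dot x y))). rewrite E in H.
    replace (dot x x + 2 * (- (dot x x + 1) / (2 * dot x y)) * dot x y + (- (dot x x + 1) / (2 * dot x y)) ^ 2 * 0) with (-1) in H by (field; auto). lra.
  - pose proof (dot_pos y). pose proof (Hq (- dot x y / dot y y)).
    assert (0 < dot y y) by lra.
    replace (dot x x + 2 * (- dot x y / dot y y) * dot x y + (- dot x y / dot y y) ^ 2 * dot y y)
      with (dot x x - dot x y ^ 2 / dot y y) in H0 by (field; lra).
    apply Rmult_le_reg_r with (/ dot y y). apply Rinv_0_lt_compat; lra.
    replace (dot x y ^ 2 * / dot y y) with (dot x y ^ 2 / dot y y) by (unfold Rdiv; ring).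
    replace (dot x x * dot y y * / dot y y) with (dot x x) by (field; lra). lra.
Qed.

Lemma CS2 x y : dot x y <= sqrt (dot x x) * sqrt (dot y y).
Proof.
  rewrite <- sqrt_mult by apply dot_pos.
  destruct (Rle_or_lt (dot x y) 0). pose proof (sqrt_pos (dot x x * dot y y)); lra.
  rewrite <- (sqrt_pow2 (dot x y)) by lra. apply sqrt_le_1_alt. apply CS.
Qed.

Lemma norm_add_le x y : sqrt (dot (vadd x y) (vadd x y)) <= sqrt (dot x x) + sqrt (dot y y).
Proof.
  rewrite <- (sqrt_pow2 (sqrt (dot x x) + sqrt (dot y y))) by (pose proof (sqrt_pos (dot x x)); pose proof (sqrt_pos (dot y y)); lra).
  apply sqrt_le_1_alt.
  rewrite dot_add_l, !dot_add_r, (dot_sym y x).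
  pose proof (CS2 x y). pose proof (pow2_sqrt (dot x x) (dot_pos x)). pose proof (pow2_sqrt (dot y y) (dot_pos y)).
  nra.
Qed.

Lemma dist_tri x y z : dist x z <= dist x y + dist y z.
Proof.
  rewrite !dist_dot.
  replace (dot (vsub x z) (vsub x z)) with (dot (vadd (vsub x y) (vsub y z)) (vadd (vsub x y) (vsub y z))).
  apply norm_add_le.
  unfold dot, vadd, vsub. apply sumFin_ext; intros; ring.
Qed.
End VecL.

Section P.
Context {n : nat}.
Implicit Types x y z a b : point n.

Lemma dist_sym x y : dist x y = dist y x.
Proof. rewrite !dist_dot. f_equal. unfold dot, vsub; apply sumFin_ext; intros; ring. Qed.

Lemma dist_gen (u v a b : point n) (c : R) : dot (vsub u v) (vsub u v) = c^2 * dot (vsub a b) (vsub a b) ->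
  dist u v = Rabs c * dist a b.
Proof. intro H. rewrite !dist_dot, H, sqrt_mult. rewrite <- sqrt_Rsqr_abs. unfold Rsqr.
  replace (c * c) with (c ^ 2) by ring. reflexivity.
  nra. apply dot_pos. Qed.

Lemma dist_self x : dist x x = 0.
Proof. rewrite (dist_gen x x x x 0). rewrite Rabs_R0; ring. unfold dot, vsub.
  transitivity (0^2 * sumFin n (fun i => (x i - x i) * (x i - x i))). rewrite <- sumFin_scal.
  apply sumFin_ext; intros; ring. ring. Qed.

Lemma norm_dot x : norm x = sqrt (dot x x).
Proof. unfold norm. rewrite dist_dot. f_equal. unfold dot, vsub, vzero; apply sumFin_ext; intros; ring. Qed.

Lemma lt_norm (r : R) x : 0 <= r -> r^2 < dot x x -> r < norm x.
Proof. intros H1 H2. rewrite norm_dot. rewrite <- (sqrt_pow2 r) by auto. apply sqrt_lt_1_alt. split; nra. Qed.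

Lemma norm_sq x : norm x ^ 2 = dot x x.
Proof. rewrite norm_dot, pow2_sqrt; auto using dot_pos. Qed.

Lemma norm_nonneg x : 0 <= norm x.
Proof. apply dist_nonneg. Qed.

Lemma dist_scal_same c1 c2 y : dist (vscal c1 y) (vscal c2 y) = Rabs (c1 - c2) * norm y.
Proof. unfold norm. apply dist_gen. unfold dot, vsub, vscal, vzero. rewrite <- sumFin_scal. apply sumFin_ext; intros; ring. Qed.

Lemma dist_le_norms a b : dist a b <= norm a + norm b.
Proof. unfold norm. rewrite (dist_sym b vzero). apply dist_tri. Qed.

Lemma norm_scal c y : norm (vscal c y) = Rabs c * norm y.
Proof. unfold norm. apply dist_gen. unfold dot, vsub, vscal, vzero. rewrite <- sumFin_scal. apply sumFin_ext; intros; ring. Qed.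

Definition lipp (L : R) (p : R -> point n) : Prop :=
  0 <= L /\ forall s t, 0 <= s <= 1 -> 0 <= t <= 1 -> dist (p s) (p t) <= L * Rabs (s - t).

Definition seg a b : R -> point n := fun t => vadd (vscal (1 - t) a) (vscal t b).

Lemma seg0 a b : forall i, seg a b 0 i = a i.
Proof. intros; unfold seg, vadd, vscal; ring. Qed.
Lemma seg1 a b : forall i, seg a b 1 i = b i.
Proof. intros; unfold seg, vadd, vscal; ring. Qed.

Lemma seg_lip a b : lipp (dist a b) (seg a b).
Proof. split. apply dist_nonneg. intros s t _ _. rewrite (dist_gen _ _ a b (t - s)).
  rewrite Rabs_minus_sym. lra.
  unfold dot, vsub, seg, vadd, vscal. rewrite <- sumFin_scal. apply sumFin_ext; intros; ring. Qed.

Lemma lipp_weaken L L' p : lipp L p -> L <= L' -> lipp L' p.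
Proof. intros [H0 H] HL. split. lra. intros s t Hs Ht. specialize (H s t Hs Ht).
  pose proof (Rabs_pos (s - t)). nra. Qed.

Definition conc (p q : R -> point n) : R -> point n :=
  fun t => if Rle_dec t (1/2) then p (2 * t) else q (2 * t - 1).

Lemma conc0 p q : conc p q 0 = p 0.
Proof. unfold conc. destruct (Rle_dec 0 (1/2)). f_equal; ring. lra. Qed.
Lemma conc1 p q : conc p q 1 = q 1.
Proof. unfold conc. destruct (Rle_dec 1 (1/2)). lra. f_equal; ring. Qed.

Lemma conc_lip L p q : lipp L p -> lipp L q -> p 1 = q 0 -> lipp (2 * L) (conc p q).
Proof.
  intros [HL Hp] [_ Hq] E. split. lra.
  assert (Hmix : forall s t, 0 <= s <= 1/2 -> 1/2 < t <= 1 -> dist (p (2*s)) (q (2*t-1)) <= 2 * L * Rabs (s - t)).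
  { intros s t Hs Ht. eapply Rle_trans. apply (dist_tri _ (p 1)).
    rewrite E. pose proof (Hp (2*s) 1 ltac:(lra) ltac:(lra)). pose proof (Hq 0 (2*t-1) ltac:(lra) ltac:(lra)).
    rewrite E in H. rewrite Rabs_left1 in H by lra. rewrite Rabs_left1 in H0 by lra.
    rewrite Rabs_left1 by lra. nra. }
  intros s t Hs Ht. unfold conc.
  destruct (Rle_dec s (1/2)); destruct (Rle_dec t (1/2)).
  - pose proof (Hp (2*s) (2*t) ltac:(lra) ltac:(lra)). replace (2*s - 2*t) with (2 * (s - t)) in H by ring.
    rewrite Rabs_mult, Rabs_right in H by lra. lra.
  - apply Hmix; lra.
  - rewrite dist_sym, Rabs_minus_sym. apply Hmix; lra.
  - pose proof (Hq (2*s-1) (2*t-1) ltac:(lra) ltac:(lra)). replace (2*s - 1 - (2*t-1)) with (2 * (s - t)) in H by ring.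
    rewrite Rabs_mult, Rabs_right in H by lra. lra.
Qed.

Lemma conc_in (S : point n -> Prop) p q : (forall t, 0 <= t <= 1 -> S (p t)) -> (forall t, 0 <= t <= 1 -> S (q t)) ->
  forall t, 0 <= t <= 1 -> S (conc p q t).
Proof. intros Hp Hq t Ht. unfold conc. destruct (Rle_dec t (1/2)). apply Hp; lra. apply Hq; lra. Qed.

Definition rev (p : R -> point n) : R -> point n := fun t => p (1 - t).

Lemma rev_lip L p : lipp L p -> lipp L (rev p).
Proof. intros [H0 H]; split; auto. intros s t Hs Ht. unfold rev.
  replace (s - t) with ((1 - t) - (1 - s)) by ring. rewrite Rabs_minus_sym. apply H; lra. Qed.

End P.

Section G.
Context {n : nat}.
Implicit Types x y z a b c e : point n.

Lemma poly_sum_lip L (p : R -> point n) : lipp L p -> forall m (t : nat -> R),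
    (forall i, (i <= m)%nat -> 0 <= t i <= 1) ->
    (forall i, (i < m)%nat -> t i <= t (S i)) ->
    poly_sum m (fun i => dist (p (t i)) (p (t (S i)))) <= L * (t m - t O).
Proof.
  intros [HL H]. induction m; intros t Ht Hm; simpl. lra.
  assert (IH := IHm t ltac:(intros; apply Ht; lia) ltac:(intros; apply Hm; lia)).
  pose proof (H (t m) (t (S m)) ltac:(apply Ht; lia) ltac:(apply Ht; lia)).
  pose proof (Hm m ltac:(lia)). rewrite Rabs_left1 in H0 by lra. nra.
Qed.

Lemma lipp_length L (p : R -> point n) : lipp L p -> length_le p L.
Proof.
  intros Hl m t Ht Hm. pose proof (poly_sum_lip L p Hl m t Ht Hm).
  destruct Hl as [HL _]. pose proof (Ht m ltac:(lia)). pose proof (Ht O ltac:(lia)). nra.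
Qed.

Lemma lipp_cont L (p : R -> point n) : lipp L p -> forall t, 0 <= t <= 1 -> forall eps, 0 < eps -> exists delta, 0 < delta /\
     forall s, 0 <= s <= 1 -> Rabs (s - t) < delta -> dist (p s) (p t) < eps.
Proof.
  intros [HL H] t Ht eps He. exists (eps / (L + 1)). split. apply Rdiv_lt_0_compat; lra.
  intros s Hs Hst. eapply Rle_lt_trans. apply H; auto.
  apply Rle_lt_trans with ((L+1) * Rabs (s - t)). pose proof (Rabs_pos (s - t)); nra.
  apply Rmult_lt_reg_l with (/ (L+1)). apply Rinv_0_lt_compat; lra.
  rewrite <- Rmult_assoc, Rinv_l, Rmult_1_l by lra. unfold Rdiv in Hst. lra.
Qed.

Lemma seg_0 a b : seg a b 0 = a.
Proof. apply functional_extensionality; apply seg0. Qed.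
Lemma seg_1 a b : seg a b 1 = b.
Proof. apply functional_extensionality; apply seg1. Qed.

Definition path3 a b c e := conc (seg a b) (conc (seg b c) (seg c e)).
Definition path4 a b c d e := conc (conc (seg a b) (seg b c)) (conc (seg c d) (seg d e)).

Lemma path3_ok (S : point n -> Prop) M a b c e :
  dist a b <= M -> dist b c <= M -> dist c e <= M ->
  (forall t, 0 <= t <= 1 -> S (seg a b t)) -> (forall t, 0 <= t <= 1 -> S (seg b c t)) ->
  (forall t, 0 <= t <= 1 -> S (seg c e t)) ->
  path3 a b c e 0 = a /\ path3 a b c e 1 = e /\ lipp (4 * M) (path3 a b c e) /\
  forall t, 0 <= t <= 1 -> S (path3 a b c e t).
Proof.
  intros H1 H2 H3 S1 S2 S3. unfold path3. split; [|split; [|split]].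
  - rewrite conc0, seg_0; auto.
  - rewrite !conc1, seg_1; auto.
  - replace (4 * M) with (2 * (2 * M)) by ring. apply conc_lip.
    apply lipp_weaken with (dist a b). apply seg_lip. pose proof (dist_nonneg b c). lra.
    apply conc_lip. apply lipp_weaken with (dist b c). apply seg_lip. lra.
    apply lipp_weaken with (dist c e). apply seg_lip. lra.
    rewrite seg_1, seg_0; auto.
    rewrite seg_1, conc0, seg_0; auto.
  - apply conc_in; auto. apply conc_in; auto.
Qed.

Lemma path4_ok (S : point n -> Prop) M a b c d e :
  dist a b <= M -> dist b c <= M -> dist c d <= M -> dist d e <= M ->
  (forall t, 0 <= t <= 1 -> S (seg a b t)) -> (forall t, 0 <= t <= 1 -> S (seg b c t)) ->
  (forall t, 0 <= t <= 1 -> S (seg c d t)) -> (forall t, 0 <= t <= 1 -> S (seg d e t)) ->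
  path4 a b c d e 0 = a /\ path4 a b c d e 1 = e /\ lipp (4 * M) (path4 a b c d e) /\
  forall t, 0 <= t <= 1 -> S (path4 a b c d e t).
Proof.
  intros H1 H2 H3 H4 S1 S2 S3 S4. unfold path4. split; [|split; [|split]].
  - rewrite !conc0, seg_0; auto.
  - rewrite !conc1, seg_1; auto.
  - pose proof (dist_nonneg a b).
    replace (4 * M) with (2 * (2 * M)) by ring. apply conc_lip.
    apply conc_lip. apply lipp_weaken with (dist a b). apply seg_lip. lra.
    apply lipp_weaken with (dist b c). apply seg_lip. lra.
    rewrite seg_1, seg_0; auto.
    apply conc_lip. apply lipp_weaken with (dist c d). apply seg_lip. lra.
    apply lipp_weaken with (dist d e). apply seg_lip. lra.
    rewrite seg_1, seg_0; auto.
    rewrite conc1, conc0, seg_1, seg_0; auto.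
  - apply conc_in; apply conc_in; auto.
Qed.

Lemma dot_scal2 (c1 c2 : R) y z : dot (vscal c1 y) (vscal c2 z) = c1 * c2 * dot y z.
Proof. rewrite dot_scal_l, dot_scal_r; ring. Qed.

Lemma seg_dot a b t : dot (seg a b t) (seg a b t) =
  (1-t)^2 * dot a a + 2 * t * (1 - t) * dot a b + t^2 * dot b b.
Proof. unfold seg. rewrite dot_add_l, !dot_add_r, !dot_scal2, (dot_sym b a). ring. Qed.

Lemma dist_sq_exp y1 y2 : dist y1 y2 ^ 2 = dot y1 y1 - 2 * dot y1 y2 + dot y2 y2.
Proof. rewrite dist_sq, dot_sub_l, !dot_sub_r, (dot_sym y2 y1). ring. Qed.

Lemma dist_y_scal (c : R) y : dist y (vscal c y) = Rabs (1 - c) * norm y.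
Proof. unfold norm. apply dist_gen. unfold dot, vsub, vscal, vzero. rewrite <- sumFin_scal. apply sumFin_ext; intros; ring. Qed.
Lemma dist_scal_y (c : R) y : dist (vscal c y) y = Rabs (1 - c) * norm y.
Proof. rewrite dist_sym. apply dist_y_scal. Qed.

Lemma dist_scal (c : R) y z : dist (vscal c y) (vscal c z) = Rabs c * dist y z.
Proof. apply dist_gen. unfold dot, vsub, vscal. rewrite <- sumFin_scal. apply sumFin_ext; intros; ring. Qed.

Definition Hperp := forall a : point n, exists w, dot w a = 0 /\ 2 * dot a a <= dot w w <= 4 * dot a a.

Lemma norm_le_tri y1 y2 : norm y2 <= norm y1 + dist y1 y2.
Proof. unfold norm. rewrite (dist_sym y1 y2). rewrite Rplus_comm. apply dist_tri. Qed.

Lemma seg_lb (A B D m t : R) : 0 <= D -> m <= A -> m <= B -> 0 <= m -> 0 <= t <= 1 ->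
  m / 2 <= (1-t)^2 * A + 2 * t * (1-t) * D + t^2 * B.
Proof.
  intros. assert ((1-t)^2 * m <= (1-t)^2 * A) by (apply Rmult_le_compat_l; [apply pow2_ge_0|lra]).
  assert (t^2 * m <= t^2 * B) by (apply Rmult_le_compat_l; [apply pow2_ge_0|lra]).
  assert (0 <= 2 * t * (1-t) * D) by (apply Rmult_le_pos; [nra|lra]).
  assert (0 <= (2*t-1)^2 * m) by (apply Rmult_le_pos; [apply pow2_ge_0|lra]).
  assert (m/2 <= (1-t)^2 * m + t^2 * m) by (replace ((1-t)^2*m + t^2*m) with (m/2 + (2*t-1)^2*m/2) by field; lra).
  lra.
Qed.

Lemma path_E_aux (R0 : R) y1 y2 : 0 < R0 -> R0 < norm y1 -> norm y1 <= norm y2 ->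
  (0 <= dot y1 y2 \/ Hperp) ->
  exists p, p 0 = y1 /\ p 1 = y2 /\ lipp (32 * dist y1 y2) p /\
   forall t, 0 <= t <= 1 -> R0 < norm (p t).
Proof.
  intros HR H1 H12 Hc.
  set (r1 := norm y1) in *. set (r2 := norm y2) in *. set (d := dist y1 y2).
  assert (N1 : dot y1 y1 = r1^2) by (symmetry; apply norm_sq).
  assert (N2 : dot y2 y2 = r2^2) by (symmetry; apply norm_sq).
  assert (Dd : d^2 = r1^2 - 2 * dot y1 y2 + r2^2) by (unfold d; rewrite dist_sq_exp; lra).
  assert (Hd0 : 0 <= d) by apply dist_nonneg.
  assert (Hr2 : r2 <= r1 + d) by apply norm_le_tri.
  assert (Hsc : forall y lam, 1 <= lam -> R0 < norm y -> forall t, 0 <= t <= 1 ->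
            R0 < norm (seg y (vscal lam y) t) /\ R0 < norm (seg (vscal lam y) y t)).
  { intros y lam Hl Hy t Ht. pose proof (norm_sq y). pose proof (norm_nonneg y).
    assert (Hc1 : 1 <= 1 - t + t * lam) by nra.
    assert (Hc2 : 1 <= (1 - t) * lam + t) by nra.
    assert (R0^2 < norm y ^2) by nra.
    split; apply lt_norm; try lra; rewrite seg_dot, ?dot_scal2, ?dot_scal_l, ?dot_scal_r;
    rewrite <- H.
    replace ((1 - t) ^ 2 * norm y ^ 2 + 2 * t * (1 - t) * (lam * norm y ^ 2) + t ^ 2 * (lam * lam * norm y ^ 2))
      with ((1 - t + t * lam)^2 * norm y ^ 2) by ring.
    assert (0 <= ((1-t+t*lam)^2 - 1) * norm y^2) by (apply Rmult_le_pos; nra). lra.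
    replace ((1 - t) ^ 2 * (lam * lam * norm y ^ 2) + 2 * t * (1 - t) * (lam * norm y ^ 2) + t ^ 2 * norm y ^ 2)
      with (((1 - t) * lam + t)^2 * norm y ^ 2) by ring.
    assert (0 <= (((1-t)*lam+t)^2 - 1) * norm y^2) by (apply Rmult_le_pos; nra). lra. }
  destruct (Rle_or_lt d r1) as [HA|HB].
  -
    set (lam := 1 + d / r1).
    assert (Hr1 : 0 < r1) by lra.
    assert (Hq9 : d / r1 * r1 = d) by (field; lra).
    assert (Hq0 : 0 <= d / r1) by nra.
    assert (Hq1 : d / r1 <= 1) by nra.
    assert (Hlam1 : 1 <= lam) by (unfold lam; lra).
    assert (Hlam2 : lam <= 2) by (unfold lam; lra).
    assert (Hlr : (lam - 1) * r1 = d) by (unfold lam; field; lra).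
    destruct (path3_ok (fun z => R0 < norm z) (2 * d) y1 (vscal lam y1) (vscal lam y2) y2) as (E0 & E1 & L & S).
    + rewrite dist_y_scal, Rabs_left1 by lra. fold r1. nra.
    + rewrite dist_scal, Rabs_right by lra. fold d. nra.
    + rewrite dist_scal_y, Rabs_left1 by lra. fold r2.
      assert ((lam - 1) * r2 <= (lam - 1) * (r1 + d)) by nra.
      assert ((lam - 1) * d <= d) by nra. nra.
    + intros t Ht; apply (proj1 (Hsc y1 lam Hlam1 H1 t Ht)).
    + intros t Ht. apply lt_norm. lra. rewrite seg_dot, !dot_scal2.
      assert (Hq : (1-t)^2 * r1^2 + 2*t*(1-t) * dot y1 y2 + t^2 * r2^2 >= r1^2 - d^2/4).
      { assert (dot y1 y2 = (r1^2 + r2^2 - d^2)/2) by lra. rewrite H.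
        replace ((1 - t) ^ 2 * r1 ^ 2 + 2 * t * (1 - t) * ((r1 ^ 2 + r2 ^ 2 - d ^ 2) / 2) + t ^ 2 * r2 ^ 2)
          with ((1 - t) * r1^2 + t * r2^2 - t * (1 - t) * d^2) by field.
        assert (r1^2 <= r2^2) by nra.
        assert (t * r1^2 <= t * r2^2) by nra.
        assert (t * (1 - t) * d^2 <= d^2 / 4) by (assert (t*(1-t) <= 1/4) by (pose proof (Rle_0_sqr (2*t - 1)); unfold Rsqr in *; lra); pose proof (pow2_ge_0 d);
            apply Rle_trans with (1/4 * d^2); [apply Rmult_le_compat_r; lra | lra]).
        lra. }
      assert (Hm : lam^2 * (r1^2 - d^2/4) >= r1^2).
      { assert (lam * r1 = r1 + d) by (unfold lam; field; lra).
        assert ((lam*r1)^2 * (r1^2 - d^2/4) >= r1^2 * r1^2).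
        { rewrite H. assert (d^2 <= r1^2) by nra.
          assert ((r1 + d)^2 >= r1^2 + 2 * r1 * d) by nra.
          assert (r1^2 - d^2/4 >= 0) by nra.
          assert ((r1+d)^2 * (r1^2 - d^2/4) >= (r1^2 + 2*r1*d) * (r1^2 - d^2/4)) by nra.
          assert ((r1^2 + 2*r1*d) * (r1^2 - d^2/4) - r1^2*r1^2 = d * (2 * r1^3 - r1^2 * d / 4 - r1 * d^2/2)) by field.
          assert (2 * r1^3 - r1^2 * d / 4 - r1 * d^2/2 >= 0).
          { assert (r1^2 * d <= r1^3) by (replace (r1^3) with (r1^2*r1) by ring; apply Rmult_le_compat_l; [apply pow2_ge_0 | lra]).
            assert (r1 * d^2 <= r1^3) by (replace (r1^3) with (r1*r1^2) by ring; apply Rmult_le_compat_l; [lra | assumption]). assert (0 <= r1^3) by (apply pow_le; lra). clear H4 H5. lra. }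
          assert (0 <= d * (2 * r1^3 - r1^2 * d / 4 - r1 * d^2/2)) by (apply Rmult_le_pos; lra).
          lra. }
        replace ((lam * r1)^2 * (r1^2 - d^2/4)) with (r1^2 * (lam^2 * (r1^2 - d^2/4))) in H0 by ring.
        assert (0 < r1^2) by nra.
        destruct (Rge_or_gt (lam ^ 2 * (r1 ^ 2 - d ^ 2 / 4)) (r1^2)); auto. nra. }
      rewrite N1, N2.
      assert (0 <= lam^2) by nra.
      assert (lam^2 * ((1 - t) ^ 2 * r1 ^ 2 + 2 * t * (1 - t) * dot y1 y2 + t ^ 2 * r2 ^ 2) >= lam^2 * (r1^2 - d^2/4)) by nra.
      assert (R0^2 < r1^2) by nra.
      replace ((1 - t) ^ 2 * (lam * lam * r1 ^ 2) + 2 * t * (1 - t) * (lam * lam * dot y1 y2) + t ^ 2 * (lam * lam * r2 ^ 2))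
        with (lam^2 * ((1 - t) ^ 2 * r1 ^ 2 + 2 * t * (1 - t) * dot y1 y2 + t ^ 2 * r2 ^ 2)) by ring.
      lra.
    + intros t Ht; apply (proj2 (Hsc y2 lam Hlam1 ltac:(change (R0 < r2); lra) t Ht)).
    + exists (path3 y1 (vscal lam y1) (vscal lam y2) y2). split; auto. split; auto. split; auto.
      eapply lipp_weaken. apply L. lra.
  - destruct (Rle_or_lt 0 (dot y1 y2)) as [Hpos|Hneg].
    +
      destruct (path3_ok (fun z => R0 < norm z) (2 * d) y1 (vscal 2 y1) (vscal 2 y2) y2) as (E0 & E1 & L & S).
      * rewrite dist_y_scal, Rabs_left1 by lra. fold r1. lra.
      * rewrite dist_scal, Rabs_right by lra. fold d. lra.
      * rewrite dist_scal_y, Rabs_left1 by lra. fold r2. lra.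
      * intros t Ht; apply (proj1 (Hsc y1 2 ltac:(lra) H1 t Ht)).
      * intros t Ht. apply lt_norm. lra. rewrite seg_dot, !dot_scal2. rewrite N1, N2.
        assert (r1^2 > R0^2) by nra. assert (r2^2 > R0^2) by nra.
        pose proof (seg_lb (2*2*r1^2) (2*2*r2^2) (2*2*dot y1 y2) (4 * R0^2) t ltac:(lra) ltac:(lra) ltac:(lra) ltac:(nra) Ht).
        assert (0 < R0^2) by nra. lra.
      * intros t Ht; apply (proj2 (Hsc y2 2 ltac:(lra) ltac:(change (R0 < r2); lra) t Ht)).
      * exists (path3 y1 (vscal 2 y1) (vscal 2 y2) y2). split; auto. split; auto. split; auto.
        eapply lipp_weaken. apply L. lra.
    + destruct Hc as [Hc|Hp]. lra.
      destruct (Hp y1) as (w0 & Hw0 & Hw1 & Hw2).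
      set (w := vscal (if Rle_dec 0 (dot w0 y2) then 1 else -1) w0).
      assert (Hw : dot w y1 = 0 /\ 0 <= dot w y2 /\ 2 * r1^2 <= dot w w <= 4 * r1^2).
      { unfold w. destruct (Rle_dec 0 (dot w0 y2)); rewrite !dot_scal_l, ?dot_scal_r, Hw0; rewrite N1 in *; nra. }
      destruct Hw as (Hw0' & Hw1' & Hw2').
      assert (Hnw : norm w <= 2 * r1).
      { rewrite norm_dot. rewrite <- (sqrt_pow2 (2 * r1)) by lra. apply sqrt_le_1_alt. lra. }
      destruct (path4_ok (fun z => R0 < norm z) (6 * d) y1 (vscal 2 y1) w (vscal 2 y2) y2) as (E0 & E1 & L & S).
      * rewrite dist_y_scal, Rabs_left1 by lra. fold r1. lra.
      * eapply Rle_trans. apply dist_le_norms. rewrite norm_scal, Rabs_right by lra. fold r1. lra.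
      * eapply Rle_trans. apply dist_le_norms. rewrite norm_scal, Rabs_right by lra. fold r2. lra.
      * rewrite dist_scal_y, Rabs_left1 by lra. fold r2. lra.
      * intros t Ht; apply (proj1 (Hsc y1 2 ltac:(lra) H1 t Ht)).
      * intros t Ht. apply lt_norm. lra. rewrite seg_dot, !dot_scal2, ?dot_scal_l, (dot_sym y1 w), Hw0'. rewrite N1.
        assert (r1^2 > R0^2) by nra.
        pose proof (seg_lb (2*2*r1^2) (dot w w) (2*0) (2 * r1^2) t ltac:(lra) ltac:(nra) ltac:(lra) ltac:(nra) Ht).
        lra.
      * intros t Ht. apply lt_norm. lra. rewrite seg_dot, !dot_scal2, ?dot_scal_r. rewrite N2.
        assert (r1^2 > R0^2) by nra. assert (r2^2 >= r1^2) by nra.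
        pose proof (seg_lb (dot w w) (2*2*r2^2) (2 * dot w y2) (2 * r1^2) t ltac:(lra) ltac:(lra) ltac:(lra) ltac:(nra) Ht).
        lra.
      * intros t Ht; apply (proj2 (Hsc y2 2 ltac:(lra) ltac:(change (R0 < r2); lra) t Ht)).
      * exists (path4 y1 (vscal 2 y1) w (vscal 2 y2) y2). split; auto. split; auto. split; auto.
        eapply lipp_weaken. apply L. lra.
Qed.

End G.

Section T.
Context {n : nat}.

Definition contp (g : R -> point n) : Prop :=
  forall t, 0 <= t <= 1 -> forall eps, 0 < eps -> exists delta, 0 < delta /\
     forall s, 0 <= s <= 1 -> Rabs (s - t) < delta -> dist (g s) (g t) < eps.

Lemma path_conn_aux (g : R -> point n) (U V : RnSet n) : contp g -> is_open U -> is_open V ->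
  (forall t, 0 <= t <= 1 -> U (g t) \/ V (g t)) ->
  (forall t, 0 <= t <= 1 -> U (g t) -> V (g t) -> False) ->
  U (g 0) -> forall t1, 0 <= t1 <= 1 -> V (g t1) -> False.
Proof.
  intros Hc HU HV Hcov Hdis H0 t1 Ht1 Hv1.
  set (E := fun s => 0 <= s <= 1 /\ forall u, 0 <= u <= s -> U (g u)).
  assert (HE0 : E 0). { split. lra. intros u Hu. replace u with 0 by lra. auto. }
  assert (Hb : bound E). { exists 1. intros s [Hs _]. lra. }
  destruct (completeness E Hb (ex_intro _ 0 HE0)) as [m [Hub Hlub]].
  assert (Hm0 : 0 <= m) by (apply Hub; auto).
  assert (Hm1 : m <= 1). { apply Hlub. intros s [Hs _]. lra. }
  assert (Hbelow : forall u, 0 <= u < m -> U (g u)).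
  { intros u Hu. destruct (classic (exists s, E s /\ u < s)) as [[s [[Hs Hs2] Hus]]|Hno].
    apply Hs2; lra.
    exfalso. assert (m <= u). { apply Hlub. intros s Hs. destruct (Rle_or_lt s u); auto. exfalso; apply Hno; eauto. }
    lra. }
  destruct (Hcov m (conj Hm0 Hm1)) as [Hum|Hvm].
  - destruct (HU _ Hum) as [eps [He Hball]].
    destruct (Hc m (conj Hm0 Hm1) eps He) as [delta [Hd Hcd]].
    assert (Hnear : forall u, 0 <= u <= 1 -> Rabs (u - m) < delta -> U (g u)).
    { intros u Hu Hum2. apply Hball. rewrite dist_sym. apply Hcd; auto. }
    destruct (Rlt_or_le m 1) as [Hlt|Hge].
    + set (s' := Rmin 1 (m + delta/2)).
      assert (Hs' : m < s' <= 1) by (unfold s'; apply Rmin_case_strong; intros; lra).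
      assert (E s'). { split. lra. intros u Hu. destruct (Rlt_or_le u m). apply Hbelow; lra.
        apply Hnear. lra. unfold s' in Hu. rewrite Rabs_right by lra.
        assert (s' <= m + delta/2) by (unfold s'; apply Rmin_r). fold s' in Hu. lra. }
      pose proof (Hub s' H). lra.
    + assert (m = 1) by lra. subst m.
      apply (Hdis t1 Ht1); auto. destruct (Rlt_or_le t1 1). apply Hbelow; lra. replace t1 with 1 by lra. auto.
  - destruct (HV _ Hvm) as [eps [He Hball]].
    destruct (Hc m (conj Hm0 Hm1) eps He) as [delta [Hd Hcd]].
    destruct (Rle_or_lt m 0) as [Hm00|Hmp].
    + assert (m = 0) by lra. subst m. apply (Hdis 0 ltac:(lra)); auto.
    + set (u := Rmax 0 (m - delta/2)).
      assert (Hu : 0 <= u < m) by (unfold u; apply Rmax_case_strong; intros; lra).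
      apply (Hdis u ltac:(lra)). apply Hbelow; auto.
      apply Hball. rewrite dist_sym. apply Hcd. lra.
      assert (m - delta/2 <= u) by (unfold u; apply Rmax_r).
      rewrite Rabs_left by lra. lra.
Qed.

Definition img (g : R -> point n) : RnSet n := fun p => exists t, 0 <= t <= 1 /\ p = g t.

Lemma path_connected (g : R -> point n) : contp g -> is_connected (img g).
Proof.
  intros Hc; unfold is_connected; intros [U [V (HU & HV & Hcov & [x [[tx [Htx ->]] Hux]] & [y [[ty [Hty ->]] Hvy]] & Hdis)]].
  assert (Hcov' : forall t, 0 <= t <= 1 -> U (g t) \/ V (g t)) by (intros; apply Hcov; exists t; auto).
  assert (Hdis' : forall t, 0 <= t <= 1 -> U (g t) -> V (g t) -> False) by (intros t Ht; apply Hdis; exists t; auto).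
  destruct (Hcov' 0 ltac:(lra)) as [H0|H0].
  - exact (path_conn_aux g U V Hc HU HV Hcov' Hdis' H0 ty Hty Hvy).
  - refine (path_conn_aux g V U Hc HV HU _ _ H0 tx Htx Hux).
    intros t Ht; destruct (Hcov' t Ht); auto.
    intros t Ht a b; eapply Hdis'; eauto.
Qed.

Lemma conn_side (A U V : RnSet n) : is_connected A -> is_open U -> is_open V ->
  (forall x, A x -> U x \/ V x) -> (forall x, A x -> U x -> V x -> False) ->
  (forall x, A x -> U x) \/ (forall x, A x -> V x).
Proof.
  intros HA HU HV Hcov Hdis.
  destruct (classic (exists x, A x /\ U x)) as [Hu|Hu]; destruct (classic (exists x, A x /\ V x)) as [Hv|Hv].
  - exfalso. apply HA. exists U, V. auto 10.
  - left. intros x Ax. destruct (Hcov x Ax); auto. exfalso; apply Hv; eauto.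
  - right. intros x Ax. destruct (Hcov x Ax); auto. exfalso; apply Hu; eauto.
  - left. intros x Ax. destruct (Hcov x Ax); auto. exfalso; apply Hv; eauto.
Qed.

Lemma union_connected (A B : RnSet n) p : is_connected A -> is_connected B -> A p -> B p ->
  is_connected (fun x => A x \/ B x).
Proof.
  intros HA HB Ap Bp; unfold is_connected; intros [U [V (HU & HV & Hcov & [x [Ax Ux]] & [y [Ay Vy]] & Hdis)]].
  assert (SA := conn_side A U V HA HU HV ltac:(intros; apply Hcov; auto) ltac:(intros z Az Uz Vz; exact (Hdis z (or_introl Az) Uz Vz))).
  assert (SB := conn_side B U V HB HU HV ltac:(intros; apply Hcov; auto) ltac:(intros z Az Uz Vz; exact (Hdis z (or_intror Az) Uz Vz))).
  destruct SA as [AU|AV]; destruct SB as [BU|BV].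
  - destruct Ay as [Ay|Ay]; apply (Hdis y); auto.
  - apply (Hdis p); auto.
  - apply (Hdis p); auto.
  - destruct Ax as [Ax|Ax]; apply (Hdis x); auto.
Qed.

Lemma component_absorb (S C : RnSet n) (g : R -> point n) : connected_component S C ->
  contp g -> C (g 0) -> (forall t, 0 <= t <= 1 -> S (g t)) -> forall t, 0 <= t <= 1 -> C (g t).
Proof.
  intros (_ & HCS & HCc & Hmax) Hc H0 HS t Ht.
  apply (Hmax (fun x => C x \/ img g x)).
  - apply union_connected with (g 0); auto. apply path_connected; auto. exists 0; split; auto; lra.
  - auto.
  - intros x [Cx|[s [Hs ->]]]; auto.
  - right. exists t; auto.
Qed.

End T.

Lemma sumFin_S m (f : Fin.t (S m) -> R) : sumFin (S m) f = f Fin.F1 + sumFin m (fun i => f (Fin.FS i)).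
Proof. reflexivity. Qed.

Lemma sumFin_0 m (f : Fin.t m -> R) : sumFin m (fun i => 0 * f i) = 0.
Proof. rewrite sumFin_scal; ring. Qed.

Section H.
Variable m : nat.
Definition e0 : point (S (S m)) := fun i => match i with Fin.F1 => 1 | Fin.FS _ => 0 end.
Definition e1 : point (S (S m)) := fun i => match i with Fin.F1 => 0 | Fin.FS j =>
   match j with Fin.F1 => 1 | Fin.FS _ => 0 end end.

Lemma dot_e0 (a : point (S (S m))) : dot e0 a = a Fin.F1.
Proof. unfold dot. rewrite sumFin_S. simpl (e0 _). rewrite sumFin_S. simpl. rewrite sumFin_0. ring. Qed.
Lemma dot_e1 (a : point (S (S m))) : dot e1 a = a (Fin.FS Fin.F1).
Proof. unfold dot. rewrite sumFin_S. simpl (e1 _). rewrite sumFin_S. simpl. rewrite sumFin_0. ring. Qed.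

Lemma two_coords (a : point (S (S m))) : a Fin.F1 ^ 2 + a (Fin.FS Fin.F1) ^ 2 <= dot a a.
Proof. unfold dot. rewrite !sumFin_S.
  pose proof (sumFin_nonneg m (fun i => a (Fin.FS (Fin.FS i)) * a (Fin.FS (Fin.FS i))) ltac:(intros; nra)). simpl. lra. Qed.

Lemma hperp_SS : @Hperp (S (S m)).
Proof.
  intro a. set (N := dot a a). assert (HN : 0 <= N) by apply dot_pos.
  destruct (Req_dec N 0) as [Z|NZ].
  { exists vzero. rewrite dot_zero_l, dot_zero_l. fold N. lra. }
  assert (Hex : exists e : point (S (S m)), dot e e = 1 /\ (dot e a)^2 <= N / 2).
  { pose proof (two_coords a). fold N in H.
    destruct (Rle_or_lt (a Fin.F1 ^ 2) (N/2)).
    - exists e0. rewrite !dot_e0. split; auto.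
    - exists e1. rewrite !dot_e1. split. reflexivity. lra. }
  destruct Hex as [e [He1 He2]].
  set (aj := dot e a) in *.
  set (u := vsub (vscal N e) (vscal aj a)).
  assert (Hua : dot u a = 0).
  { unfold u. rewrite dot_sub_l, !dot_scal_l. fold aj N. ring. }
  assert (Huu : dot u u = N^2 - aj^2 * N).
  { unfold u. rewrite dot_sub_l, !dot_sub_r, !dot_scal2, He1, (dot_sym a e). fold aj N. ring. }
  assert (Hs : 0 < sqrt N) by (apply sqrt_lt_R0; lra).
  assert (Hs2 : N = sqrt N * sqrt N) by (symmetry; apply sqrt_sqrt; lra).
  exists (vscal (2 / sqrt N) u). rewrite dot_scal_l, Hua, dot_scal2, Huu.
  replace (2 / sqrt N * (2 / sqrt N) * (N ^ 2 - aj ^ 2 * N)) with (4 * N - 4 * aj^2).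
  pose proof (pow2_ge_0 aj). fold N. lra.
  set (s := sqrt N) in *. clearbody s. rewrite Hs2. field. lra.
Qed.
End H.

Lemma path_E {k : nat} (R0 : R) (y1 y2 : point k) : 0 < R0 -> R0 < norm y1 -> R0 < norm y2 ->
  (0 <= dot y1 y2 \/ @Hperp k) ->
  exists p, p 0 = y1 /\ p 1 = y2 /\ lipp (32 * dist y1 y2) p /\
   forall t, 0 <= t <= 1 -> R0 < norm (p t).
Proof.
  intros HR H1 H2 Hc. destruct (Rle_or_lt (norm y1) (norm y2)).
  - apply path_E_aux; auto.
  - destruct (path_E_aux R0 y2 y1 HR H2 ltac:(lra)) as [p (E0 & E1 & L & S)].
    rewrite dot_sym; auto.
    exists (rev p). unfold rev. replace (1 - 0) with 1 by ring. replace (1 - 1) with 0 by ring.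
    split; auto. split; auto. split. rewrite dist_sym. apply rev_lip; auto.
    intros t Ht. apply S; lra.
Qed.

Lemma kcases (k : nat) : (forall a : point k, norm a = 0) \/
  (forall a b c : point k, dot a b * dot c c = dot a c * dot b c) \/ @Hperp k.
Proof.
  destruct k as [|[|m]].
  - left. intro a. unfold norm, dist. simpl. apply sqrt_0.
  - right; left. intros. unfold dot. simpl. ring.
  - right; right. apply hperp_SS.
Qed.

Lemma bounded_union {n : nat} (P Q K : RnSet n) : is_bounded P -> is_bounded Q ->
  (forall x, K x -> P x \/ Q x) -> is_bounded K.
Proof.
  intros [MP HP] [MQ HQ] HK.
  destruct (classic (exists p0, P p0)) as [[p0 Hp0]|NP]; destruct (classic (exists q0, Q q0)) as [[q0 Hq0]|NQ].
  - pose proof (HP p0 p0 Hp0 Hp0). pose proof (HQ q0 q0 Hq0 Hq0). rewrite dist_self in *.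
    exists (MP + MQ + dist p0 q0). intros x y Kx Ky.
    pose proof (dist_nonneg p0 q0).
    destruct (HK x Kx) as [Px|Qx]; destruct (HK y Ky) as [Py|Qy].
    + pose proof (HP x y Px Py). lra.
    + pose proof (dist_tri x p0 y). pose proof (dist_tri p0 q0 y). pose proof (HP x p0 Px Hp0). pose proof (HQ q0 y Hq0 Qy). lra.
    + pose proof (dist_tri x q0 y). pose proof (dist_tri q0 p0 y). pose proof (HQ x q0 Qx Hq0). pose proof (HP p0 y Hp0 Py).
      rewrite (dist_sym q0 p0) in *. lra.
    + pose proof (HQ x y Qx Qy). lra.
  - exists MP. intros x y Kx Ky. destruct (HK x Kx) as [Px|Qx]; [|exfalso; eauto].
    destruct (HK y Ky) as [Py|Qy]; [|exfalso; eauto]. auto.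
  - exists MQ. intros x y Kx Ky. destruct (HK x Kx) as [Px|Qx]; [exfalso; eauto|].
    destruct (HK y Ky) as [Py|Qy]; [exfalso; eauto|]. auto.
  - exists 0. intros x y Kx Ky. destruct (HK x Kx) as [Px|Qx]; exfalso; eauto.
Qed.

Lemma length_mono {n : nat} (h : R -> point n) L L' : length_le h L -> L <= L' -> length_le h L'.
Proof. intros H HL m t H1 H2. specialize (H m t H1 H2). lra. Qed.

Lemma norm_pos_dot {k : nat} (R0 : R) (y : point k) : 0 < R0 -> R0 < norm y -> 0 < dot y y.
Proof. intros. rewrite <- norm_sq. nra. Qed.

Theorem mainTheorem2 (n : nat) (X : RnSet n) :
  is_closed X -> ~ is_bounded X -> lipschitz_regular_at_infinity X ->
  exists K : RnSet n, is_compact K /\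
    forall C : RnSet n, connected_component (setminus X K) C -> LNE C.
Proof.
  intros HXc _ [k [K1 [K2 [f [[_ HK1b] [[HK2c HK2b] [g [lam (Hlam & Hfmap & Hgmap & Hgf & Hfg & Hf & Hg)]]]]]]]].
  assert (HR : exists R0, 0 < R0 /\ forall y, K1 y -> norm y < R0).
  { destruct HK1b as [M HM]. destruct (classic (exists x0, K1 x0)) as [[x0 Hx0]|NK].
    - exists (norm x0 + Rabs M + 1). split. pose proof (norm_nonneg x0); pose proof (Rabs_pos M); lra.
      intros y Ky. pose proof (norm_le_tri x0 y). pose proof (HM x0 y Hx0 Ky). pose proof (Rle_abs M). lra.
    - exists 1. split. lra. intros y Ky. exfalso; eauto. }
  destruct HR as [R0 [HR0 HK1R]].
  set (K := fun p => X p /\ (K2 p \/ norm (g p) <= R0)).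
  assert (HnotK : forall p, setminus X K p -> X p /\ ~ K2 p /\ R0 < norm (g p)).
  { intros p [Xp NK]. split; auto. split. intro; apply NK; split; auto.
    destruct (Rle_or_lt (norm (g p)) R0) as [Hle|Hlt]; auto.
    exfalso; apply NK; split; auto. }
  exists K. split. split.
  -
    intros p NKp. destruct (classic (X p)) as [Xp|NXp].
    + assert (NK2 : ~ K2 p) by (intro; apply NKp; split; auto).
      assert (HgR : R0 < norm (g p)) by (destruct (Rle_or_lt (norm (g p)) R0); auto; exfalso; apply NKp; split; auto).
      destruct (HK2c p NK2) as [e1 [He1 Hb1]].
      exists (Rmin e1 ((norm (g p) - R0) / lam)). split.
      apply Rmin_case; auto. apply Rdiv_lt_0_compat; lra.
      intros y Hy Ky0; destruct Ky0 as [Xy Ky]. assert (dist p y < e1) by (eapply Rlt_le_trans; [apply Hy| apply Rmin_l]).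
      assert (NK2y : ~ K2 y) by (apply Hb1; auto).
      destruct Ky as [K2y|Hny]; [contradiction|].
      assert (dist p y < (norm (g p) - R0) / lam) by (eapply Rlt_le_trans; [apply Hy| apply Rmin_r]).
      pose proof (Hg p y (conj Xp NK2) (conj Xy NK2y)).
      pose proof (norm_le_tri (g y) (g p)). rewrite (dist_sym (g y)) in H2.
      assert (lam * dist p y < norm (g p) - R0).
      { apply Rmult_lt_reg_l with (/ lam). apply Rinv_0_lt_compat; lra.
        rewrite <- Rmult_assoc, Rinv_l, Rmult_1_l by lra. unfold Rdiv in H0. lra. }
      lra.
    + destruct (HXc p NXp) as [e [He Hb]]. exists e. split; auto. intros y Hy Ky0; destruct Ky0 as [Xy _]. exact (Hb y Hy Xy).
  -
    apply bounded_union with K2 (fun p => setminus X K2 p /\ norm (g p) <= R0); auto.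
    + exists (2 * lam * R0). intros x y [Bx Nx] [By Ny].
      rewrite <- (Hfg x Bx), <- (Hfg y By).
      eapply Rle_trans. apply Hf; auto. pose proof (dist_le_norms (g x) (g y)). nra.
    + intros x [Xx [K2x|Nx]]; auto. destruct (classic (K2 x)); auto. right. split; auto. split; auto.
  -
    intros C HC. exists (32 * lam * lam). split. nra.
    intros x1 x2 C1 C2 eps Heps.
    destruct HC as (HCne & HCS & HCc & Hmax).
    destruct (HnotK x1 (HCS x1 C1)) as (X1 & N1 & R1).
    destruct (HnotK x2 (HCS x2 C2)) as (X2 & N2 & R2).
    set (y1 := g x1) in *. set (y2 := g x2) in *.
    assert (Hd : 0 <= dot y1 y2 \/ @Hperp k).
    { destruct (kcases k) as [H0|[H1|H2]].
      - exfalso. rewrite H0 in R1. lra.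
      - left. destruct (Rle_or_lt 0 (dot y1 y2)) as [|Hneg]; auto. exfalso.
        assert (P1 : 0 < dot y1 y1) by (apply norm_pos_dot with R0; auto).
        set (del := R0 / (2 * lam)).
        assert (Hdel : 0 < del) by (unfold del; apply Rdiv_lt_0_compat; lra).
        set (U := fun p => exists y, ~ K1 y /\ R0 < norm y /\ 0 < dot y y1 /\ dist p (f y) < del).
        set (V := fun p => exists y, ~ K1 y /\ R0 < norm y /\ dot y y1 < 0 /\ dist p (f y) < del).
        assert (Hopen : forall (s : R -> Prop), is_open (fun p => exists y, ~ K1 y /\ R0 < norm y /\ s (dot y y1) /\ dist p (f y) < del)).
        { intros s p [y (Ay & Ny & Sy & Dy)]. exists (del - dist p (f y)). split. lra.
          intros q Hq. exists y. split; auto. split; auto. split; auto.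
          pose proof (dist_tri q p (f y)). rewrite (dist_sym q p) in H. lra. }
        apply HCc. exists U, V. split; [apply (Hopen (fun r => 0 < r))|].
        split; [apply (Hopen (fun r => r < 0))|].
        split; [|split; [|split]].
        + intros q Cq. destruct (HnotK q (HCS q Cq)) as (Xq & Nq & Rq).
          assert (Bq : setminus X K2 q) by (split; auto).
          assert (Hz : dot (g q) y1 <> 0).
          { intro E. pose proof (H1 (g q) (g q) y1). rewrite E in H. pose proof (norm_pos_dot R0 (g q) HR0 Rq). nra. }
          assert (Dq : dist q (f (g q)) < del) by (rewrite (Hfg q Bq), dist_self; auto).
          destruct (Rle_or_lt 0 (dot (g q) y1)).
          * left. exists (g q). split; [apply Hgmap; auto|]. split; auto. split; [lra|auto].
          * right. exists (g q). split; [apply Hgmap; auto|]. split; auto.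
        + exists x1. split; auto. exists y1. split. apply Hgmap; split; auto. split; auto. split; auto.
          unfold y1. rewrite (Hfg x1 (conj X1 N1)), dist_self; auto.
        + exists x2. split; auto. exists y2. split. apply Hgmap; split; auto. split; auto. split. rewrite dot_sym; auto.
          unfold y2. rewrite (Hfg x2 (conj X2 N2)), dist_self; auto.
        + intros q Cq [y (Ay & Ny & Sy & Dy)] [y' (Ay' & Ny' & Sy' & Dy')].
          assert (Hyy : dot y y' < 0).
          { pose proof (H1 y y' y1). assert (dot y y1 * dot y' y1 < 0) by nra. nra. }
          assert (dist y y' ^ 2 > R0 ^ 2).
          { rewrite dist_sq_exp. pose proof (norm_sq y). pose proof (norm_sq y'). nra. }
          assert (Dyy : dist y y' > R0) by (pose proof (dist_nonneg y y'); nra).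
          pose proof (Hfmap y Ay) as By. pose proof (Hfmap y' Ay') as By'.
          pose proof (Hg (f y) (f y') By By') as Hgg. rewrite (Hgf y Ay), (Hgf y' Ay') in Hgg.
          pose proof (dist_tri (f y) q (f y')) as Htr. rewrite (dist_sym (f y) q) in Htr.
          assert (Hld : lam * (2 * del) = R0) by (unfold del; field; lra).
          assert (lam * dist (f y) (f y') < lam * (2 * del)) by (apply Rmult_lt_compat_l; lra).
          lra.
      - right; auto. }
    destruct (path_E R0 y1 y2 HR0 R1 R2 Hd) as [p (E0 & E1 & Lp & Sp)].
    assert (Ap : forall t, 0 <= t <= 1 -> ~ K1 (p t)).
    { intros t Ht Kp. pose proof (HK1R _ Kp). pose proof (Sp t Ht). lra. }
    set (h := fun t => f (p t)).
    assert (Lh : lipp (lam * (32 * dist y1 y2)) h).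
    { destruct Lp as [L0 Lp]. split. nra. intros s t Hs Ht. unfold h.
      eapply Rle_trans. apply Hf; apply Ap; auto. pose proof (Lp s t Hs Ht). rewrite Rmult_assoc. apply Rmult_le_compat_l; lra. }
    assert (Hin : forall t, 0 <= t <= 1 -> setminus X K (h t)).
    { intros t Ht. unfold h. destruct (Hfmap _ (Ap t Ht)) as [Xh N2h]. split; auto.
      intros [_ [K2h|Nh]]; auto. rewrite (Hgf _ (Ap t Ht)) in Nh. pose proof (Sp t Ht). lra. }
    assert (h0 : h 0 = x1) by (unfold h; rewrite E0; unfold y1; apply Hfg; split; auto).
    assert (h1 : h 1 = x2) by (unfold h; rewrite E1; unfold y2; apply Hfg; split; auto).
    exists h. split.
    + split; auto. split; auto. split.
      * apply (component_absorb (setminus X K) C h (conj HCne (conj HCS (conj HCc Hmax)))).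
        exact (lipp_cont _ _ Lh). rewrite h0; auto. auto.
      * apply (lipp_cont _ _ Lh).
    + eapply length_mono. apply lipp_length; eauto.
      pose proof (Hg x1 x2 (conj X1 N1) (conj X2 N2)). fold y1 y2 in H.
      assert (lam * (32 * dist y1 y2) <= 32 * lam * lam * dist x1 x2) by nra. lra.
Qed.
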